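(* Let $(g_n)_{n\ge 0}$ be a sequence of positive real numbers (not depending on $a$) and, for $a>0$, let \[ g(a,x)=\sum_{n=0}^{\infty} g_n\Gamma(a+n)x^n \] (a formal power series in $x$), where $\Gamma$ is Euler's gamma function. Let $b>a>0$ and $\delta>0$, and write \[ \psi_{a,b,\delta}(x)=g(a+\delta,x)g(b,x)-g(b+\delta,x)g(a,x)=\sum_{m=0}^{\infty}\psi_m x^m . \] Then $\psi_m<0$ for all $m\ge0$, so that $a\mapsto g(a,x)$ is strictly log-convex for $x>0$.
   Context: Power series are understood formally; the log-convexity statement refers to values $x>0$ at which the series converge. *)

(* Defs.v *)
From Stdlib Require Import Reals.
From Coquelicot Require Import Coquelicot.
Open Scope R_scope.

Definition Gamma (a : R) : R :=
  RInt_gen (fun t => Rpower t (a - 1) * exp (- t))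
           (at_right 0) (Rbar_locally p_infty).

(* n-th coefficient of the formal power series g(a,x) = sum_n g_n Gamma(a+n) x^n *)
Definition gcoef (g : nat -> R) (a : R) (n : nat) : R := g n * Gamma (a + INR n).

Definition cauchy_coef (u v : nat -> R) (m : nat) : R :=
  sum_f_R0 (fun k => u k * v (m - k)%nat) m.

Definition psi_coef (g : nat -> R) (a b d : R) (m : nat) : R :=
  cauchy_coef (gcoef g (a + d)) (gcoef g b) m
  - cauchy_coef (gcoef g (b + d)) (gcoef g a) m.

(* value of the series g(a,x) (meaningful where it converges) *)
Definition gval (g : nat -> R) (a x : R) : R :=
  Series (fun n => gcoef g a n * x ^ n).

(* Main.v *)
Require Import Defs.
From Stdlib Require Import Reals Lra Psatz FunctionalExtensionality Classical.
From Coquelicot Require Import Coquelicot.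
Open Scope R_scope.

Definition fs (s x : R) := Rpower x (s-1) * exp(-x).

Lemma fs_derive s x : 0 < x -> ex_derive (fs s) x.
Proof. intros. unfold fs, Rpower. auto_derive. lra. Qed.

Lemma fs_cont s x : 0 < x -> continuous (fs s) x.
Proof. intros; apply (ex_derive_continuous (K:=R_AbsRing) (V:=R_NormedModule)), fs_derive; auto. Qed.

Lemma fs_ex s a b : 0 < a -> 0 < b -> ex_RInt (fs s) a b.
Proof.
  intros. apply (ex_RInt_continuous (V:=R_CompleteNormedModule)); intros z Hz. apply fs_cont.
  assert (0 < Rmin a b) by (apply Rmin_glb_lt; auto). lra.
Qed.

Lemma fs_pos s x : 0 < fs s x.
Proof. unfold fs, Rpower. apply Rmult_lt_0_compat; apply exp_pos. Qed.

Lemma gen_cauchy (f : R -> R) :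
 (forall a b, 0<a -> 0<b -> ex_RInt f a b) ->
 (forall eps, 0<eps -> exists d, 0<d /\ forall a a', 0<a -> 0<a' -> a<d -> a'<d -> Rabs (RInt f a a') < eps) ->
 (forall eps, 0<eps -> exists M, forall b b', M<b -> M<b' -> Rabs (RInt f b b') < eps) ->
 ex_RInt_gen f (at_right 0) (Rbar_locally p_infty).
Proof.
  intros Hex H0 Hinf.
  unfold ex_RInt_gen, is_RInt_gen.
  refine (proj1 (filterlimi_locally_cauchy (F:=filter_prod (at_right 0) (Rbar_locally p_infty)) (U:=R_CompleteSpace) (fun ab y => is_RInt f (fst ab) (snd ab) y) _) _).
  - exists (fun a => 0<a) (fun b => 0<b).
    + exists (mkposreal 1 Rlt_0_1). intros; assumption.
    + exists 0. intros; lra.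
    + intros a b Ha Hb. split.
      * exists (RInt f a b). apply (RInt_correct (V:=R_CompleteNormedModule)), Hex; auto.
      * intros y1 y2 H1 H2. simpl in *.
        rewrite <- (is_RInt_unique (V:=R_CompleteNormedModule) _ _ _ _ H1), <- (is_RInt_unique (V:=R_CompleteNormedModule) _ _ _ _ H2). reflexivity.
  - intros eps. destruct (H0 (eps/2)) as [d [Hd Hd']]. destruct eps; simpl; lra.
    destruct (Hinf (eps/2)) as [M HM]. destruct eps; simpl; lra.
    exists (fun u => (0 < fst u < d) /\ (M < snd u /\ 0 < snd u)). split.
    + exists (fun a => 0<a<d) (fun b => M<b /\ 0<b).
      * exists (mkposreal d Hd). intros y Hy Hy'. split; auto.
        unfold ball in Hy; simpl in Hy; unfold AbsRing_ball, abs, minus, plus, opp in Hy; simpl in Hy.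
        apply Rabs_lt_between' in Hy. lra.
      * exists (Rmax M 0). intros x Hx. split.
        apply Rle_lt_trans with (2:=Hx); apply Rmax_l.
        apply Rle_lt_trans with (2:=Hx); apply Rmax_r.
      * intros x y Hx Hy; simpl; tauto.
    + intros [a b] [a' b'] [[Ha Ha'] [Hb Hb']] [[Hc Hc'] [Hd1 Hd2]] u' v' Hu Hv.
      simpl in *.
      rewrite <- (is_RInt_unique (V:=R_CompleteNormedModule) _ _ _ _ Hu), <- (is_RInt_unique (V:=R_CompleteNormedModule) _ _ _ _ Hv).
      change (Rabs (RInt f a' b' - RInt f a b) < eps).
      assert (E : RInt f a' b' = RInt f a' a + (RInt f a b + RInt f b b')).
      { pose proof (RInt_Chasles (V:=R_CompleteNormedModule) f a b b' (Hex _ _ Ha Hb') (Hex _ _ Hb' Hd2)) as C1.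
        pose proof (RInt_Chasles (V:=R_CompleteNormedModule) f a' a b' (Hex _ _ Hc Ha) (Hex _ _ Ha Hd2)) as C2.
        change (RInt f a b + RInt f b b' = RInt f a b') in C1.
        change (RInt f a' a + RInt f a b' = RInt f a' b') in C2. lra. }
      rewrite E.
      specialize (Hd' a' a Hc Ha Hc' Ha'). specialize (HM b b' Hb Hd1).
      replace (RInt f a' a + (RInt f a b + RInt f b b') - RInt f a b) with (RInt f a' a + RInt f b b') by ring.
      eapply Rle_lt_trans. apply Rabs_triang. lra.
Qed.

Lemma RInt_nonneg_R (f : R -> R) a b : a <= b -> ex_RInt f a b -> (forall x, a < x < b -> 0 <= f x) -> 0 <= RInt f a b.
Proof. intros; apply RInt_ge_0; auto. Qed.

Lemma fs_int_ge0 s a b : 0 < a -> a <= b -> 0 <= RInt (fs s) a b.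
Proof. intros. apply RInt_ge_0; auto. apply fs_ex; lra. intros; left; apply fs_pos. Qed.

Lemma pow_cont s x : 0 < x -> continuous (fun y => Rpower y s) x.
Proof. intros. apply (ex_derive_continuous (K:=R_AbsRing) (V:=R_NormedModule)). unfold Rpower. auto_derive. lra. Qed.

Lemma fs_int_le0 s a b : 0 < s -> 0 < a -> a <= b -> RInt (fs s) a b <= Rpower b s / s.
Proof.
  intros Hs Ha Hab.
  assert (Hg : ex_RInt (fun x => Rpower x (s-1)) a b).
  { apply (ex_RInt_continuous (V:=R_CompleteNormedModule)). intros z Hz. apply pow_cont.
    rewrite Rmin_left in Hz; lra. }
  assert (L1 : RInt (fs s) a b <= RInt (fun x => Rpower x (s-1)) a b).
  { apply (RInt_le (fs s) (fun x => Rpower x (s-1))); auto. apply fs_ex; lra.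
    intros x Hx. unfold fs. rewrite <- (Rmult_1_r (Rpower x (s-1))) at 2.
    apply Rmult_le_compat_l. unfold Rpower; left; apply exp_pos.
    rewrite <- exp_0. left; apply exp_increasing; lra. }
  eapply Rle_trans. apply L1.
  assert (HI : is_RInt (fun x => Rpower x (s-1)) a b (minus ((fun x => Rpower x s / s) b) ((fun x => Rpower x s / s) a))).
  { apply (is_RInt_derive (V:=R_CompleteNormedModule) (fun x => Rpower x s / s)).
    - intros x Hx. rewrite Rmin_left in Hx by lra.
      apply is_derive_Reals.
      replace (Rpower x (s-1)) with (/s * (s * Rpower x (s-1))) by (field; lra).
      unfold Rdiv. 
      replace (fun x0 => Rpower x0 s * / s) with (fun x0 => / s * Rpower x0 s) by (apply functional_extensionality; intros; ring).
      apply derivable_pt_lim_scal. apply derivable_pt_lim_power. lra.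
    - intros x Hx. rewrite Rmin_left in Hx by lra. apply pow_cont. lra. }
  rewrite (is_RInt_unique (V:=R_CompleteNormedModule) _ _ _ _ HI).
  change (Rpower b s / s - Rpower a s / s <= Rpower b s / s).
  assert (0 < Rpower a s / s). { unfold Rdiv, Rpower. apply Rmult_lt_0_compat. apply exp_pos. apply Rinv_0_lt_compat; lra. }
  lra.
Qed.

Lemma RInt_abs_sym (f : R -> R) a b : ex_RInt f a b -> Rabs (RInt f a b) = Rabs (RInt f b a).
Proof.
  intros H. rewrite <- (opp_RInt_swap (V:=R_CompleteNormedModule) f a b H).
  change (Rabs (RInt f a b) = Rabs (- RInt f a b)). rewrite Rabs_Ropp; auto.
Qed.

Lemma fs_near0 s : 0 < s -> forall eps, 0 < eps -> exists d, 0 < d /\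
  forall a a', 0 < a -> 0 < a' -> a < d -> a' < d -> Rabs (RInt (fs s) a a') < eps.
Proof.
  intros Hs eps He.
  exists (Rpower (s*eps) (1/s)). split. unfold Rpower; apply exp_pos.
  assert (K : forall y, 0 < y -> y < Rpower (s*eps) (1/s) -> Rpower y s / s < eps).
  { intros y Hy Hyd.
    assert (Rpower y s < Rpower (Rpower (s*eps) (1/s)) s).
    { apply Rlt_Rpower_l; auto. }
    rewrite Rpower_mult in H. replace (1/s*s) with 1 in H by (field; lra).
    rewrite Rpower_1 in H by nra.
    apply (Rmult_lt_reg_r s); auto. unfold Rdiv. rewrite Rmult_assoc, Rinv_l by lra. lra. }
  assert (M : forall a a', 0 < a -> a <= a' -> a' < Rpower (s*eps) (1/s) -> Rabs (RInt (fs s) a a') < eps).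
  { intros a a' Ha Haa Ha'. rewrite Rabs_pos_eq by (apply fs_int_ge0; auto).
    eapply Rle_lt_trans. apply fs_int_le0; auto. apply K; lra. }
  intros a a' Ha Ha' Had Ha'd.
  destruct (Rle_dec a a').
  - apply M; auto.
  - rewrite RInt_abs_sym by (apply fs_ex; auto). apply M; auto; lra.
Qed.

Lemma nat_big (r : R) : exists N : nat, r <= INR N /\ (1 <= N)%nat.
Proof.
  destruct (INR_archimed 1 r) as [n Hn]. lra.
  exists (S n). split. rewrite S_INR; lra. lia.
Qed.

Lemma exp_pow_INR (y : R) (n : nat) : exp (INR n * y) = exp y ^ n.
Proof.
  induction n. simpl. rewrite Rmult_0_l, exp_0; auto.
  rewrite S_INR, Rmult_plus_distr_r, exp_plus, IHn, Rmult_1_l. simpl. ring.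
Qed.

Lemma fs_inf_bound s : exists C, 0 < C /\ forall x, 1 <= x -> fs s x <= C * exp (- x / 2).
Proof.
  destruct (nat_big (s - 1)) as [N [HN HN1]].
  assert (HNp : 0 < INR N) by (apply lt_0_INR; lia).
  exists ((2 * INR N) ^ N). split. apply pow_lt; lra.
  intros x Hx. unfold fs.
  assert (P1 : Rpower x (s-1) <= x ^ N).
  { rewrite <- Rpower_pow by lra. apply Rle_Rpower; lra. }
  assert (P2 : x ^ N <= (2 * INR N) ^ N * exp (x / 2)).
  { assert (E : x ^ N = (2 * INR N) ^ N * (x / (2 * INR N)) ^ N).
    { rewrite <- Rpow_mult_distr. f_equal. field. lra. }
    rewrite E. apply Rmult_le_compat_l. left; apply pow_lt; lra.
    replace (x/2) with (INR N * (x / (2 * INR N))) by (field; lra).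
    rewrite exp_pow_INR. apply pow_incr. split.
    left; apply Rdiv_lt_0_compat; lra.
    pose proof (exp_ineq1_le (x / (2 * INR N))).
    assert (0 < x / (2 * INR N)) by (apply Rdiv_lt_0_compat; lra). lra. }
  assert (E2 : exp (x/2) * exp (-x) = exp (-x/2)) by (rewrite <- exp_plus; f_equal; field).
  rewrite <- E2. assert (0 < exp (-x)) by apply exp_pos.
  assert (0 < exp (-x/2)) by apply exp_pos.
  assert (0 < exp (x/2)) by apply exp_pos.
  assert (0 <= Rpower x (s-1)) by (left; unfold Rpower; apply exp_pos).
  nra.
Qed.

Lemma fs_inf s : 0 < s -> forall eps, 0 < eps -> exists M,
  forall b b', M < b -> M < b' -> Rabs (RInt (fs s) b b') < eps.
Proof.
  intros Hs eps He.
  destruct (fs_inf_bound s) as [C [HC HB]].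
  assert (K : forall b b', 1 <= b -> b <= b' -> RInt (fs s) b b' <= 2 * C * exp (- b / 2)).
  { intros b b' Hb Hbb.
    assert (Hg : forall x, continuous (fun y => C * exp (- y / 2)) x).
    { intros x. apply (ex_derive_continuous (K:=R_AbsRing) (V:=R_NormedModule)). auto_derive. auto. }
    assert (L1 : RInt (fs s) b b' <= RInt (fun y => C * exp (- y / 2)) b b').
    { apply RInt_le; auto. apply fs_ex; lra.
      apply (ex_RInt_continuous (V:=R_CompleteNormedModule)). intros; apply Hg.
      intros x Hx. apply HB. lra. }
    assert (HI : is_RInt (fun y => C * exp (- y / 2)) b b'
        (minus ((fun y => -2 * C * exp (- y / 2)) b') ((fun y => -2 * C * exp (- y / 2)) b))).
    { apply (is_RInt_derive (V:=R_CompleteNormedModule) (fun y => -2 * C * exp (- y / 2))).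
      - intros x Hx. auto_derive. auto. replace (exp (- x * / 2)) with (exp (- x / 2)) by (f_equal; unfold Rdiv; ring). field.
      - intros; apply Hg. }
    rewrite (is_RInt_unique (V:=R_CompleteNormedModule) _ _ _ _ HI) in L1.
    change (RInt (fs s) b b' <= -2 * C * exp (- b' / 2) - -2 * C * exp (- b / 2)) in L1.
    assert (0 < exp (- b' / 2)) by apply exp_pos. nra. }
  assert (Hq : 0 < eps / (2 * C)) by (apply Rdiv_lt_0_compat; lra).
  exists (Rmax 1 (-2 * ln (eps / (2 * C)))).
  assert (K2 : forall b, Rmax 1 (-2 * ln (eps / (2 * C))) < b -> 2 * C * exp (- b / 2) < eps).
  { intros b Hb. pose proof (Rmax_r 1 (-2 * ln (eps / (2 * C)))).
    assert (exp (- b / 2) < exp (ln (eps / (2 * C)))) by (apply exp_increasing; lra).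
    rewrite exp_ln in H0 by auto.
    apply (Rmult_lt_compat_l (2*C)) in H0; [|lra].
    replace (2 * C * (eps / (2 * C))) with eps in H0 by (field; lra). lra. }
  assert (M : forall b b', Rmax 1 (-2 * ln (eps / (2 * C))) < b -> b <= b' -> Rabs (RInt (fs s) b b') < eps).
  { intros b b' Hb Hbb. pose proof (Rmax_l 1 (-2 * ln (eps / (2 * C)))).
    rewrite Rabs_pos_eq by (apply fs_int_ge0; lra).
    eapply Rle_lt_trans. apply K; lra. apply K2; auto. }
  intros b b' Hb Hb'.
  pose proof (Rmax_l 1 (-2 * ln (eps / (2 * C)))).
  destruct (Rle_dec b b').
  - apply M; auto.
  - rewrite RInt_abs_sym by (apply fs_ex; lra). apply M; auto; lra.
Qed.

Lemma fs_gen s : 0 < s -> ex_RInt_gen (fs s) (at_right 0) (Rbar_locally p_infty).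
Proof.
  intros Hs. apply gen_cauchy.
  - intros; apply fs_ex; auto.
  - apply fs_near0; auto.
  - apply fs_inf; auto.
Qed.

Lemma Gamma_is s : 0 < s -> is_RInt_gen (fs s) (at_right 0) (Rbar_locally p_infty) (Gamma s).
Proof.
  intros Hs. unfold Gamma. apply (RInt_gen_correct (V:=R_CompleteNormedModule)). apply fs_gen; auto.
Qed.

Lemma gen_pos (h : R -> R) l c d :
  is_RInt_gen h (at_right 0) (Rbar_locally p_infty) l ->
  (forall x, 0 < x -> 0 <= h x) -> 0 < c -> c < d ->
  (forall x, c <= x <= d -> continuous h x) -> (forall x, c < x < d -> 0 < h x) -> 0 < l.
Proof.
  intros Hl Hnn Hc Hcd Hcont Hp.
  assert (HI : 0 < RInt h c d) by (apply RInt_gt_0; auto).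
  set (I := RInt h c d) in *.
  assert (Hev := proj1 (filterlimi_locally (F:=filter_prod (at_right 0) (Rbar_locally p_infty)) (U:=R_UniformSpace) _ l) Hl (mkposreal (I/2) ltac:(lra))).
  assert (Hq : filter_prod (at_right 0) (Rbar_locally p_infty) (fun ab => 0 < fst ab < c /\ d < snd ab)).
  { exists (fun a => 0 < a < c) (fun b => d < b).
    - exists (mkposreal c Hc). intros y Hy Hy'. split; auto.
      unfold ball in Hy; simpl in Hy; unfold AbsRing_ball, abs, minus, plus, opp in Hy; simpl in Hy.
      apply Rabs_lt_between' in Hy. lra.
    - exists d. auto.
    - intros; simpl; auto. }
  destruct (Hierarchy.filter_ex _ (filter_and _ _ Hev Hq)) as [[a b] [[z [Hz Hball]] [[Ha Hac] Hdb]]].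
  simpl in *.
  change (Rabs (z - l) < I/2) in Hball.
  assert (Eab : ex_RInt h a b) by (exists z; auto).
  assert (E1 : ex_RInt h a c) by (apply (ex_RInt_Chasles_1 (V:=R_CompleteNormedModule)) with b; auto; lra).
  assert (E2 : ex_RInt h c b) by (apply (ex_RInt_Chasles_2 (V:=R_CompleteNormedModule)) with a; auto; lra).
  assert (E3 : ex_RInt h c d) by (apply (ex_RInt_Chasles_1 (V:=R_CompleteNormedModule)) with b; auto; lra).
  assert (E4 : ex_RInt h d b) by (apply (ex_RInt_Chasles_2 (V:=R_CompleteNormedModule)) with c; auto; lra).
  pose proof (RInt_Chasles (V:=R_CompleteNormedModule) h a c b E1 E2) as C1.
  pose proof (RInt_Chasles (V:=R_CompleteNormedModule) h c d b E3 E4) as C2.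
  change (RInt h a c + RInt h c b = RInt h a b) in C1.
  change (RInt h c d + RInt h d b = RInt h c b) in C2.
  rewrite (is_RInt_unique (V:=R_CompleteNormedModule) _ _ _ _ Hz) in C1.
  assert (0 <= RInt h a c) by (apply RInt_ge_0; auto; try lra; intros; apply Hnn; lra).
  assert (0 <= RInt h d b) by (apply RInt_ge_0; auto; try lra; intros; apply Hnn; lra).
  fold I in C2.
  apply Rabs_lt_between' in Hball. lra.
Qed.

Lemma Gamma_pos s : 0 < s -> 0 < Gamma s.
Proof.
  intros Hs. apply (gen_pos (fs s) (Gamma s) 1 2); try lra.
  apply Gamma_is; auto.
  intros; left; apply fs_pos.
  intros; apply fs_cont; lra.
  intros; apply fs_pos.
Qed.

Lemma young_le t X Y : 0 < t < 1 -> exp (t*X + (1-t)*Y) <= t * exp X + (1-t) * exp Y.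
Proof.
  intros Ht. set (M := t*X + (1-t)*Y).
  assert (EX : exp X = exp M * exp (X - M)) by (rewrite <- exp_plus; f_equal; ring).
  assert (EY : exp Y = exp M * exp (Y - M)) by (rewrite <- exp_plus; f_equal; ring).
  pose proof (exp_ineq1_le (X - M)). pose proof (exp_ineq1_le (Y - M)).
  pose proof (exp_pos M).
  rewrite EX, EY.
  assert (t * (exp M * (1 + (X - M))) + (1-t) * (exp M * (1 + (Y - M))) = exp M) by (unfold M; ring).
  assert (t * exp M * (1 + (X - M)) <= t * exp M * exp (X - M)) by (apply Rmult_le_compat_l; nra).
  assert ((1-t) * exp M * (1 + (Y - M)) <= (1-t) * exp M * exp (Y - M)) by (apply Rmult_le_compat_l; nra).
  lra.
Qed.

Lemma young_lt t X Y : 0 < t < 1 -> X <> Y -> exp (t*X + (1-t)*Y) < t * exp X + (1-t) * exp Y.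
Proof.
  intros Ht HXY. set (M := t*X + (1-t)*Y).
  assert (EX : exp X = exp M * exp (X - M)) by (rewrite <- exp_plus; f_equal; ring).
  assert (EY : exp Y = exp M * exp (Y - M)) by (rewrite <- exp_plus; f_equal; ring).
  assert (X - M <> 0). { unfold M. intro. apply HXY. assert ((1-t)*(X-Y) = 0) by lra.
    apply Rmult_integral in H0. destruct H0; lra. }
  pose proof (exp_ineq1 (X - M) H). pose proof (exp_ineq1_le (Y - M)).
  pose proof (exp_pos M).
  rewrite EX, EY.
  assert (t * (exp M * (1 + (X - M))) + (1-t) * (exp M * (1 + (Y - M))) = exp M) by (unfold M; ring).
  assert (t * exp M * (1 + (X - M)) < t * exp M * exp (X - M)) by (apply Rmult_lt_compat_l; nra).
  assert ((1-t) * exp M * (1 + (Y - M)) <= (1-t) * exp M * exp (Y - M)) by (apply Rmult_le_compat_l; nra).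
  lra.
Qed.

Lemma Gamma_lc s1 s2 t : 0 < s1 -> 0 < s2 -> s1 <> s2 -> 0 < t < 1 ->
  Gamma (t * s1 + (1-t) * s2) < exp (t * ln (Gamma s1) + (1-t) * ln (Gamma s2)).
Proof.
  intros H1 H2 H12 Ht.
  set (s := t * s1 + (1-t) * s2).
  assert (Hs : 0 < s) by (unfold s; nra).
  pose proof (Gamma_pos s1 H1) as G1. pose proof (Gamma_pos s2 H2) as G2.
  set (lA := ln (Gamma s1)). set (lB := ln (Gamma s2)).
  set (K := t * lA + (1-t) * lB).
  set (c1 := t * exp (- lA)). set (c2 := (1-t) * exp (- lB)). set (c3 := exp (- K)).
  set (h := fun x => c1 * fs s1 x + c2 * fs s2 x - c3 * fs s x).
  assert (Hh : is_RInt_gen h (at_right 0) (Rbar_locally p_infty) (c1 * Gamma s1 + c2 * Gamma s2 - c3 * Gamma s)).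
  { assert (P := is_RInt_gen_minus _ _ _ _
       (is_RInt_gen_plus _ _ _ _ (is_RInt_gen_scal _ c1 _ (Gamma_is s1 H1)) (is_RInt_gen_scal _ c2 _ (Gamma_is s2 H2)))
       (is_RInt_gen_scal _ c3 _ (Gamma_is s Hs))).
    exact P. }
  set (X := fun x => (s1 - 1) * ln x - x - lA).
  set (Y := fun x => (s2 - 1) * ln x - x - lB).
  assert (Hform : forall x, h x = t * exp (X x) + (1-t) * exp (Y x) - exp (t * X x + (1-t) * Y x)).
  { intros x. unfold h, c1, c2, c3, fs, Rpower, X, Y.
    assert (exp (- lA) * (exp ((s1 - 1) * ln x) * exp (- x)) = exp ((s1 - 1) * ln x - x - lA)) by
      (rewrite <- !exp_plus; f_equal; ring).
    assert (exp (- lB) * (exp ((s2 - 1) * ln x) * exp (- x)) = exp ((s2 - 1) * ln x - x - lB)) by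
      (rewrite <- !exp_plus; f_equal; ring).
    assert (exp (- K) * (exp ((s - 1) * ln x) * exp (- x)) =
      exp (t * ((s1 - 1) * ln x - x - lA) + (1 - t) * ((s2 - 1) * ln x - x - lB))) by
      (rewrite <- !exp_plus; f_equal; unfold K, s; ring).
    rewrite <- H, <- H0, <- H3. ring. }
  assert (Hval : c1 * Gamma s1 + c2 * Gamma s2 - c3 * Gamma s = 1 - c3 * Gamma s).
  { unfold c1, c2, lA, lB. rewrite !exp_Ropp, !exp_ln by auto. field; lra. }
  assert (Hcont : forall x, 0 < x -> continuous h x).
  { intros x Hx. apply (ex_derive_continuous (K:=R_AbsRing) (V:=R_NormedModule)).
    unfold h, fs, Rpower. auto_derive. lra. }
  assert (Hnn : forall x, 0 < x -> 0 <= h x).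
  { intros x Hx. rewrite Hform. pose proof (young_le t (X x) (Y x) Ht). lra. }
  assert (Hpos : 0 < 1 - c3 * Gamma s).
  { rewrite <- Hval.
    destruct (classic (exists x0, 1 < x0 < 2 /\ X x0 = Y x0)) as [[x0 [Hx0 Ex0]] | Hno].
    - apply (gen_pos h _ 2 3); auto; try lra.
      + intros; apply Hcont; lra.
      + intros x Hx. rewrite Hform. cut (X x <> Y x). intros.
        pose proof (young_lt t (X x) (Y x) Ht H). lra.
        intro E. unfold X, Y in E, Ex0.
        assert ((s1 - s2) * (ln x - ln x0) = 0) by lra.
        apply Rmult_integral in H. destruct H. lra.
        assert (ln x0 < ln x) by (apply ln_increasing; lra). lra.
    - apply (gen_pos h _ 1 2); auto; try lra.
      + intros; apply Hcont; lra.
      + intros x Hx. rewrite Hform. cut (X x <> Y x). intros.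
        pose proof (young_lt t (X x) (Y x) Ht H). lra.
        intro E. apply Hno. exists x; auto. }
  unfold c3 in Hpos. rewrite exp_Ropp in Hpos.
  pose proof (exp_pos K).
  apply (Rmult_lt_compat_l (exp K)) in Hpos; auto.
  replace (exp K * (1 - / exp K * Gamma s)) with (exp K - Gamma s) in Hpos by (field; lra).
  fold s. fold lA lB. fold K. lra.
Qed.

Lemma Gamma_inc p q h : 0 < p -> p < q -> 0 < h ->
  Gamma (p + h) * Gamma q < Gamma (q + h) * Gamma p.
Proof.
  intros Hp Hpq Hh.
  set (l := (q - p) / (q - p + h)).
  assert (Hl : 0 < l < 1).
  { unfold l. split. apply Rdiv_lt_0_compat; lra.
    apply (Rmult_lt_reg_r (q - p + h)); [lra|]. unfold Rdiv. rewrite Rmult_assoc, Rinv_l by lra. lra. }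
  assert (Hl' : 0 < 1 - l < 1) by lra.
  pose proof (Gamma_lc p (q + h) l Hp ltac:(lra) ltac:(lra) Hl) as L1.
  pose proof (Gamma_lc p (q + h) (1 - l) Hp ltac:(lra) ltac:(lra) Hl') as L2.
  replace (l * p + (1 - l) * (q + h)) with (p + h) in L1 by (unfold l; field; lra).
  replace ((1 - l) * p + (1 - (1 - l)) * (q + h)) with q in L2 by (unfold l; field; lra).
  assert (0 < Gamma (p + h)) by (apply Gamma_pos; lra).
  assert (0 < Gamma q) by (apply Gamma_pos; lra).
  assert (Gamma (p + h) * Gamma q < exp (l * ln (Gamma p) + (1 - l) * ln (Gamma (q + h))) *
    exp ((1 - l) * ln (Gamma p) + (1 - (1 - l)) * ln (Gamma (q + h)))).
  { apply Rmult_le_0_lt_compat; lra. }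
  rewrite <- exp_plus in H1.
  replace (l * ln (Gamma p) + (1 - l) * ln (Gamma (q + h)) +
       ((1 - l) * ln (Gamma p) + (1 - (1 - l)) * ln (Gamma (q + h)))) with
    (ln (Gamma (q + h)) + ln (Gamma p)) in H1 by ring.
  rewrite exp_plus, !exp_ln in H1 by (apply Gamma_pos; lra). exact H1.
Qed.

Lemma Gamma_inc_le p q h : 0 < p -> p <= q -> 0 < h ->
  Gamma (p + h) * Gamma q <= Gamma (q + h) * Gamma p.
Proof.
  intros Hp Hpq Hh. destruct Hpq.
  - left; apply Gamma_inc; auto.
  - subst. right; ring.
Qed.

Lemma pair_ineq0 a b d K J : 0 < a -> a < b -> 0 < d -> 0 <= K -> K <= J ->
  Gamma (a+d+K) * Gamma (b+J) + Gamma (a+d+J) * Gamma (b+K) <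
  Gamma (b+d+K) * Gamma (a+J) + Gamma (b+d+J) * Gamma (a+K).
Proof.
  intros Ha Hab Hd HK HKJ.
  set (X1 := Gamma (a+d+K) * Gamma (b+J)).
  set (X2 := Gamma (a+d+J) * Gamma (b+K)).
  set (Y1 := Gamma (b+d+K) * Gamma (a+J)).
  set (Y2 := Gamma (b+d+J) * Gamma (a+K)).
  assert (HX1 : X1 <= Y2).
  { pose proof (Gamma_inc_le (a+K) (b+J) d ltac:(lra) ltac:(lra) Hd).
    unfold X1, Y2. replace (a+d+K) with (a+K+d) by ring. replace (b+d+J) with (b+J+d) by ring. lra. }
  assert (HX2 : X2 <= Y2).
  { pose proof (Gamma_inc_le (a+K) (a+d+J) (b-a) ltac:(lra) ltac:(lra) ltac:(lra)).
    unfold X2, Y2. replace (a+K+(b-a)) with (b+K) in H by ring.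
    replace (a+d+J+(b-a)) with (b+d+J) in H by ring. lra. }
  assert (HP : X1 * X2 < Y1 * Y2).
  { pose proof (Gamma_inc (a+K) (b+K) d ltac:(lra) ltac:(lra) Hd) as P1.
    pose proof (Gamma_inc (a+J) (b+J) d ltac:(lra) ltac:(lra) Hd) as P2.
    replace (a+K+d) with (a+d+K) in P1 by ring. replace (b+K+d) with (b+d+K) in P1 by ring.
    replace (a+J+d) with (a+d+J) in P2 by ring. replace (b+J+d) with (b+d+J) in P2 by ring.
    assert (0 < Gamma (a+d+K) * Gamma (b+K)) by (apply Rmult_lt_0_compat; apply Gamma_pos; lra).
    assert (0 < Gamma (a+d+J) * Gamma (b+J)) by (apply Rmult_lt_0_compat; apply Gamma_pos; lra).
    assert (Gamma (a+d+K) * Gamma (b+K) * (Gamma (a+d+J) * Gamma (b+J)) <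
            Gamma (b+d+K) * Gamma (a+K) * (Gamma (b+d+J) * Gamma (a+J))) by
      (apply Rmult_le_0_lt_compat; lra).
    unfold X1, X2, Y1, Y2. nra. }
  assert (0 < X1) by (apply Rmult_lt_0_compat; apply Gamma_pos; lra).
  assert (0 < X2) by (apply Rmult_lt_0_compat; apply Gamma_pos; lra).
  assert (0 < Y2) by (apply Rmult_lt_0_compat; apply Gamma_pos; lra).
  assert (0 <= (Y2 - X1) * (Y2 - X2)) by nra.
  (* X1 + X2 <= Y2 + X1 X2 / Y2 < Y2 + Y1 *)
  assert (Y2 * (X1 + X2) < Y2 * (Y1 + Y2)) by nra.
  apply Rmult_lt_reg_l in H3; auto.
Qed.

Lemma pair_ineq a b d K J : 0 < a -> a < b -> 0 < d -> 0 <= K -> 0 <= J ->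
  Gamma (a+d+K) * Gamma (b+J) + Gamma (a+d+J) * Gamma (b+K) <
  Gamma (b+d+K) * Gamma (a+J) + Gamma (b+d+J) * Gamma (a+K).
Proof.
  intros. destruct (Rle_dec K J).
  - apply pair_ineq0; auto.
  - pose proof (pair_ineq0 a b d J K H H0 H1 H3 ltac:(lra)). lra.
Qed.

Lemma sum_neg (f : nat -> R) n : (forall k, (k <= n)%nat -> f k < 0) -> sum_f_R0 f n < 0.
Proof.
  induction n; intros H; simpl.
  - apply H; lia.
  - assert (sum_f_R0 f n < 0) by (apply IHn; intros; apply H; lia).
    specialize (H (S n) ltac:(lia)). lra.
Qed.

Lemma part1 (g : nat -> R) (hg : forall n, 0 < g n) :
  forall (a b d : R), 0 < a -> a < b -> 0 < d -> forall m : nat, psi_coef g a b d m < 0.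
Proof.
  intros a b d Ha Hab Hd m.
  unfold psi_coef, cauchy_coef. rewrite <- minus_sum.
  set (F := fun k => gcoef g (a + d) k * gcoef g b (m - k) - gcoef g (b + d) k * gcoef g a (m - k)).
  change (sum_f_R0 F m < 0).
  assert (E : 2 * sum_f_R0 F m = sum_f_R0 (fun k => F k + F (m - k)%nat) m).
  { rewrite plus_sum, sum_f_R0_skip. ring. }
  cut (sum_f_R0 (fun k => F k + F (m - k)%nat) m < 0). lra.
  apply sum_neg. intros k Hk.
  unfold F, gcoef. replace (m - (m - k))%nat with k by lia.
  pose proof (pair_ineq a b d (INR k) (INR (m - k)) Ha Hab Hd (pos_INR _) (pos_INR _)).
  pose proof (Rmult_lt_0_compat _ _ (hg k) (hg (m - k)%nat)).
  nra.
Qed.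

Lemma series_lt (u v : nat -> R) : (forall n, 0 <= u n <= v n) -> u 0%nat < v 0%nat ->
  ex_series u -> ex_series v -> Series u < Series v.
Proof.
  intros H H0 Hu Hv. rewrite (Series_incr_1 u Hu), (Series_incr_1 v Hv).
  assert (Series (fun k => u (S k)) <= Series (fun k => v (S k))).
  { apply Series_le. intros; apply H. apply (ex_series_incr_1 v); auto. }
  lra.
Qed.

Lemma series_pos (u : nat -> R) : (forall n, 0 < u n) -> ex_series u -> 0 < Series u.
Proof.
  intros H Hu. rewrite (Series_incr_1 u Hu).
  assert (0 <= Series (fun k => u (S k))).
  { assert (Z : Series (fun _ : nat => 0) = 0).
    { pose proof (Series_scal_l 0 (fun _ => 0)) as Hz. rewrite Rmult_0_l in Hz. etransitivity; [|exact Hz].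
      f_equal; apply functional_extensionality; intros; ring. }
    rewrite <- Z. apply Series_le. intros; split; [lra| left; apply H].
    apply (ex_series_incr_1 u); auto. }
  specialize (H 0%nat). lra.
Qed.

Lemma part2 (g : nat -> R) (hg : forall n, 0 < g n) :
  forall x : R, 0 < x ->
     (forall a, 0 < a -> ex_series (fun n => gcoef g a n * x ^ n)) ->
     forall a1 a2 t : R, 0 < a1 -> a1 < a2 -> 0 < t < 1 ->
       ln (gval g (t * a1 + (1 - t) * a2) x)
       < t * ln (gval g a1 x) + (1 - t) * ln (gval g a2 x).
Proof.
  intros x Hx Hex a1 a2 t H1 H12 Ht.
  set (c := fun a n => gcoef g a n * x ^ n).
  assert (Hc : forall a n, 0 < a -> 0 < c a n).
  { intros a n Ha. unfold c, gcoef. apply Rmult_lt_0_compat. apply Rmult_lt_0_compat; auto.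
    apply Gamma_pos. pose proof (pos_INR n); lra. apply pow_lt; auto. }
  set (s := t * a1 + (1 - t) * a2).
  assert (Hs : 0 < s) by (unfold s; nra).
  set (A := gval g a1 x). set (B := gval g a2 x).
  assert (HA : 0 < A) by (apply series_pos; [intros; apply (Hc a1); auto | apply Hex; auto]).
  assert (HB : 0 < B) by (apply series_pos; [intros; apply (Hc a2); lra | apply Hex; lra]).
  set (K := t * ln A + (1 - t) * ln B).
  set (v := fun n => c a1 n * (exp K * t / A) + c a2 n * (exp K * (1 - t) / B)).
  assert (Hpt : forall n, c s n < v n).
  { intros n.
    assert (Pn : 0 < c a1 n) by (apply Hc; auto). assert (Qn : 0 < c a2 n) by (apply Hc; lra).
    assert (L : Gamma (t * (a1 + INR n) + (1 - t) * (a2 + INR n)) <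
                exp (t * ln (Gamma (a1 + INR n)) + (1 - t) * ln (Gamma (a2 + INR n)))).
    { pose proof (pos_INR n). apply Gamma_lc; lra. }
    replace (t * (a1 + INR n) + (1 - t) * (a2 + INR n)) with (s + INR n) in L by (unfold s; ring).
    assert (Hg1 : 0 < Gamma (a1 + INR n)) by (apply Gamma_pos; pose proof (pos_INR n); lra).
    assert (Hg2 : 0 < Gamma (a2 + INR n)) by (apply Gamma_pos; pose proof (pos_INR n); lra).
    assert (Hw : 0 < g n * x ^ n) by (apply Rmult_lt_0_compat; auto; apply pow_lt; auto).
    assert (S1 : c s n < exp (t * ln (c a1 n) + (1 - t) * ln (c a2 n))).
    { unfold c, gcoef.
      replace (g n * Gamma (a1 + INR n) * x ^ n) with ((g n * x ^ n) * Gamma (a1 + INR n)) by ring.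
      replace (g n * Gamma (a2 + INR n) * x ^ n) with ((g n * x ^ n) * Gamma (a2 + INR n)) by ring.
      rewrite (ln_mult (g n * x ^ n) (Gamma (a1 + INR n))) by auto.
      rewrite (ln_mult (g n * x ^ n) (Gamma (a2 + INR n))) by auto.
      replace (t * (ln (g n * x ^ n) + ln (Gamma (a1 + INR n))) + (1 - t) * (ln (g n * x ^ n) + ln (Gamma (a2 + INR n))))
        with (ln (g n * x ^ n) + (t * ln (Gamma (a1 + INR n)) + (1 - t) * ln (Gamma (a2 + INR n)))) by ring.
      rewrite exp_plus, exp_ln by auto.
      replace (g n * Gamma (s + INR n) * x ^ n) with ((g n * x ^ n) * Gamma (s + INR n)) by ring.
      apply Rmult_lt_compat_l; auto. }
    assert (S2 : exp (t * ln (c a1 n) + (1 - t) * ln (c a2 n)) =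
                 exp K * exp (t * (ln (c a1 n) - ln A) + (1 - t) * (ln (c a2 n) - ln B))).
    { rewrite <- exp_plus. f_equal. unfold K. ring. }
    pose proof (young_le t (ln (c a1 n) - ln A) (ln (c a2 n) - ln B) Ht) as Y.
    assert (Ea : exp (ln (c a1 n) - ln A) = c a1 n / A) by
      (unfold Rminus, Rdiv; rewrite exp_plus, exp_Ropp, !exp_ln; auto).
    assert (Eb : exp (ln (c a2 n) - ln B) = c a2 n / B) by
      (unfold Rminus, Rdiv; rewrite exp_plus, exp_Ropp, !exp_ln; auto).
    rewrite Ea, Eb in Y.
    unfold v. pose proof (exp_pos K).
    assert (exp K * exp (t * (ln (c a1 n) - ln A) + (1 - t) * (ln (c a2 n) - ln B)) <=
            exp K * (t * (c a1 n / A) + (1 - t) * (c a2 n / B))) by (apply Rmult_le_compat_l; lra).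
    replace (c a1 n * (exp K * t / A) + c a2 n * (exp K * (1 - t) / B)) with
      (exp K * (t * (c a1 n / A) + (1 - t) * (c a2 n / B))) by (field; lra).
    lra. }
  assert (Ev1 : ex_series (fun n => c a1 n * (exp K * t / A))) by (apply ex_series_scal_r, Hex; auto).
  assert (Ev2 : ex_series (fun n => c a2 n * (exp K * (1 - t) / B))) by (apply ex_series_scal_r, Hex; lra).
  assert (Ev : ex_series v).
  { unfold v. apply (ex_series_plus (K:=R_AbsRing) (V:=R_NormedModule) _ _ Ev1 Ev2). }
  assert (Sv : Series v = exp K).
  { unfold v. rewrite Series_plus by auto. rewrite !Series_scal_r.
    change (Series (c a1)) with A. change (Series (c a2)) with B. field; lra. }
  assert (Hlt : gval g s x < exp K).
  { rewrite <- Sv. apply (series_lt (c s) v).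
    - intros n; split. left; apply Hc; auto. left; apply Hpt.
    - apply Hpt.
    - apply Hex; auto.
    - exact Ev. }
  assert (0 < gval g s x) by (apply series_pos; [intros; apply Hc; auto | apply Hex; auto]).
  fold s. fold A B. fold K.
  rewrite <- (ln_exp K). apply ln_increasing; auto.
Qed.

Theorem theorem2 (g : nat -> R) (hg : forall n, 0 < g n) :
  (forall (a b d : R), 0 < a -> a < b -> 0 < d ->
     forall m : nat, psi_coef g a b d m < 0)
  /\
  (forall x : R, 0 < x ->
     (forall a, 0 < a -> ex_series (fun n => gcoef g a n * x ^ n)) ->
     forall a1 a2 t : R, 0 < a1 -> a1 < a2 -> 0 < t < 1 ->
       ln (gval g (t * a1 + (1 - t) * a2) x)
       < t * ln (gval g a1 x) + (1 - t) * ln (gval g a2 x)).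
Proof.
  split. apply part1; auto. apply part2; auto.
Qed.
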